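(* Let $\sigma\in\mathbb Z_{\ge1}$. The normalizer $\mathrm{Norm}_P(\Lambda_\sigma)=\{p\in NAM:p\Lambda_\sigma p^{-1}=\Lambda_\sigma\}$ is the semi-direct product of the groups $\mathrm{Norm}_N(\Lambda_\sigma)=\{n(\beta/\sigma,\rho):\beta\in\mathbb Z[i],\rho\in\mathbb R\}$ and $\mathrm{Norm}_M(\Lambda_\sigma)=\{m(\zeta)\in M:\zeta^{12}=1\}$.
   Context: $G=\mathrm{SU}(2,1)=\{g\in\mathrm{SL}_3(\mathbb C):\bar g^t\,\mathrm{diag}(1,1,-1)\,g=\mathrm{diag}(1,1,-1)\}$ with subgroups $N=\{n(b,r)=\begin{pmatrix}1+ir-\frac{|b|^2}2&b&-ir+\frac{|b|^2}2\\-\bar b&1&\bar b\\ ir-\frac{|b|^2}2&b&1-ir+\frac{|b|^2}2\end{pmatrix}:b\in\mathbb C,r\in\mathbb R\}$, $A=\{a(t)=\begin{pmatrix}\frac{t+t^{-1}}2&0&\frac{t-t^{-1}}2\\0&1&0\\\frac{t-t^{-1}}2&0&\frac{t+t^{-1}}2\end{pmatrix}:t>0\}$, $M=\{m(\zeta)=\mathrm{diag}(\zeta,\zeta^{-2},\zeta):|\zeta|=1\}$. Write $n(x,y,r)=n(x+iy,r)$. $\Lambda_\sigma$ is the lattice in $N$ generated by $n(1,0,0)$, $n(0,1,0)$, $n(0,0,2/\sigma)$. *)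

(* Defs.v *)
From HB Require Import structures.
From mathcomp Require Import all_boot all_order all_algebra.
From mathcomp Require Import complex.
From mathcomp Require Import reals.
Set Implicit Arguments. Unset Strict Implicit. Unset Printing Implicit Defensive.
Import Order.TTheory GRing.Theory Num.Theory.
Local Open Scope ring_scope.

Section SU21.
Variable R : realType.
Local Notation C := (complex R).
Local Notation M3 := ('M[C]_3).

Definition rC (x : R) : C := Complex x 0.
Definition cj (z : C) : C := let: Complex x y := z in Complex x (- y).
Definition iC : C := Complex 0 1.

Definition mx3 (a b c d e f g h k : C) : M3 :=
  \matrix_(i < 3, j < 3)
    nth 0 (nth [::] [:: [:: a; b; c]; [:: d; e; f]; [:: g; h; k]] i) j.

Definition nmx (b : C) (r : R) : M3 :=
  let h := rC (1/2) * (b * cj b) in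
  mx3 (1 + iC * rC r - h) b (- iC * rC r + h)
      (- cj b) 1 (cj b)
      (iC * rC r - h) b (1 - iC * rC r + h).

Definition amx (t : R) : M3 :=
  mx3 (rC ((t + t^-1) / 2)) 0 (rC ((t - t^-1) / 2))
      0 1 0
      (rC ((t - t^-1) / 2)) 0 (rC ((t + t^-1) / 2)).

Definition mmx (z : C) : M3 := mx3 z 0 0 0 (z ^- 2) 0 0 0 z.

Definition is_unit_modulus (z : C) : Prop := z * cj z = 1.

Definition inN (g : M3) : Prop := exists (b : C) (r : R), g = nmx b r.
Definition inA (g : M3) : Prop := exists t : R, 0 < t /\ g = amx t.
Definition inM (g : M3) : Prop := exists z : C, is_unit_modulus z /\ g = mmx z.
Definition inP (g : M3) : Prop :=
  exists n a m, inN n /\ inA a /\ inM m /\ g = n *m a *m m.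

Inductive Lambda (sigma : nat) : M3 -> Prop :=
  | Lam_one : Lambda sigma 1%:M
  | Lam_gen1 : Lambda sigma (nmx 1 0)
  | Lam_gen2 : Lambda sigma (nmx iC 0)
  | Lam_gen3 : Lambda sigma (nmx 0 (2 / sigma%:R))
  | Lam_mul g h : Lambda sigma g -> Lambda sigma h -> Lambda sigma (g *m h)
  | Lam_inv g : Lambda sigma g -> Lambda sigma (invmx g).

Definition normalizes (L : M3 -> Prop) (p : M3) : Prop :=
  (forall g, L g -> L (p *m g *m invmx p)) /\
  (forall h, L h -> exists g, L g /\ h = p *m g *m invmx p).

Definition Norm (S : M3 -> Prop) (L : M3 -> Prop) (p : M3) : Prop :=
  S p /\ normalizes L p.

Definition gaussian_int (z : C) : Prop :=
  exists x y : int, z = Complex x%:~R y%:~R.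

End SU21.

(* Main.v *)
Require Import Defs.
From HB Require Import structures.
From mathcomp Require Import all_boot all_order all_algebra.
From mathcomp Require Import complex.
From mathcomp Require Import reals.
Import Order.TTheory GRing.Theory Num.Theory.
From mathcomp Require Import ring lra zify.
Set Implicit Arguments. Unset Strict Implicit. Unset Printing Implicit Defensive.
Local Open Scope ring_scope.


Section S.
Variable R : realType.
Local Notation C := (complex R).

Lemma rCE (x : R) : rC x = (x%:C)%C. Proof. by []. Qed.
Lemma cjE (z : C) : cj z = conjc z. Proof. by case: z. Qed.
Lemma cj_mul (z w : C) : cj (z * w) = cj z * cj w. Proof. by rewrite !cjE rmorphM. Qed.
Lemma cj_add (z w : C) : cj (z + w) = cj z + cj w. Proof. by rewrite !cjE rmorphD. Qed.
Lemma cj_opp (z : C) : cj (- z) = - cj z. Proof. by rewrite !cjE rmorphN. Qed.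
Lemma cj_rC (x : R) : cj (rC x) = rC x. Proof. by rewrite /cj /rC /= oppr0. Qed.
Lemma cjK (z : C) : cj (cj z) = z. Proof. by case: z => a b /=; rewrite opprK. Qed.
Lemma cj_iC : cj (iC R) = - iC R. Proof. by apply/eqP; rewrite eq_complex /= oppr0 !eqxx. Qed.
Lemma rC_add (x y : R) : rC (x + y) = rC x + rC y. Proof. by rewrite !rCE rmorphD. Qed.
Lemma rC_mul (x y : R) : rC (x * y) = rC x * rC y. Proof. by rewrite !rCE rmorphM. Qed.
Lemma rC_opp (x : R) : rC (- x) = - rC x. Proof. by rewrite !rCE rmorphN. Qed.
Lemma rC_inv (x : R) : rC (x^-1) = (rC x)^-1. Proof. by rewrite !rCE fmorphV. Qed.
Lemma rC_nat n : rC (n%:R : R) = n%:R. Proof. by rewrite !rCE rmorph_nat. Qed.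
Lemma rC1 : rC (1:R) = 1. Proof. by []. Qed.
Lemma rC0 : rC (0:R) = 0. Proof. by []. Qed.
Lemma rC_half : rC (1/2 : R) = 1/2. Proof. by rewrite rC_mul rC1 rC_inv rC_nat. Qed.
Ltac ceq := apply/eqP; rewrite eq_complex /=; apply/andP; split; apply/eqP.
Lemma iC2 : iC R * iC R = -1.
Proof. by ceq; ring. Qed.
Lemma iIm (w : C) : iC R * rC (complex.Im w) = (w - cj w) / 2.
Proof.
have h2 : (2:C) != 0 by rewrite pnatr_eq0.
apply: (mulIf h2); rewrite mulfVK //.
by case: w => a b /=; ceq; ring.
Qed.
Lemma two_neq0 : (2:C) != 0. Proof. by rewrite pnatr_eq0. Qed.

Ltac mx3_ext := apply/matrixP; case=> [[|[|[|?]]] ?] //; case=> [[|[|[|?]]] ?] //;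
  rewrite !mxE ?big_ord_recl ?big_ord0 ?mxE /=.



Lemma mx3_mul (a b c d e f g h k a' b' c' d' e' f' g' h' k' : C) :
  mx3 a b c d e f g h k *m mx3 a' b' c' d' e' f' g' h' k' =
  mx3 (a*a' + b*d' + c*g') (a*b' + b*e' + c*h') (a*c' + b*f' + c*k')
      (d*a' + e*d' + f*g') (d*b' + e*e' + f*h') (d*c' + e*f' + f*k')
      (g*a' + h*d' + k*g') (g*b' + h*e' + k*h') (g*c' + h*f' + k*k').
Proof. mx3_ext; ring. Qed.

Lemma mx3_1 : 1%:M = mx3 1 0 0 0 1 0 0 0 1 :> 'M[C]_3.
Proof. by mx3_ext. Qed.

Lemma nmxE (b : C) (r : R) : nmx b r =
  mx3 (1 + iC R * rC r - 1/2 * (b * cj b)) b (- iC R * rC r + 1/2 * (b * cj b))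
      (- cj b) 1 (cj b)
      (iC R * rC r - 1/2 * (b * cj b)) b (1 - iC R * rC r + 1/2 * (b * cj b)).
Proof. by rewrite /nmx rC_half. Qed.

Lemma nmx_mul (b b' : C) (r r' : R) : nmx b r *m nmx b' r' = nmx (b + b') (r + r' + complex.Im (cj b * b')).
Proof.
rewrite !nmxE mx3_mul; congr mx3; rewrite ?rC_add ?mulNr ?mulrDr ?iIm ?cj_add ?cj_mul ?cjK; by field.
Qed.

Lemma cj_exp (z : C) n : cj (z ^+ n) = cj z ^+ n. Proof. by rewrite !cjE rmorphXn. Qed.

Lemma nmx00 : nmx 0 0 = 1%:M :> 'M[C]_3.
Proof. by rewrite nmxE mx3_1 rC0 cjE rmorph0; congr mx3; ring. Qed.

Lemma mmx1 : mmx 1 = 1%:M :> 'M[C]_3.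
Proof. by rewrite /mmx mx3_1 expr1n invr1. Qed.

Lemma amxE (t : R) : amx t = mx3 ((rC t + (rC t)^-1)/2) 0 ((rC t - (rC t)^-1)/2) 0 1 0
   ((rC t - (rC t)^-1)/2) 0 ((rC t + (rC t)^-1)/2).
Proof. by rewrite /amx ?rC_mul ?rC_add ?rC_opp ?rC_inv ?rC_nat. Qed.

Lemma amx1 : amx 1 = 1%:M :> 'M[C]_3.
Proof. rewrite amxE mx3_1 rC1 invr1; congr mx3; by field. Qed.

Lemma mmx_mul (z w : C) : z != 0 -> w != 0 -> mmx z *m mmx w = mmx (z * w).
Proof. move=> hz hw; rewrite /mmx mx3_mul; congr mx3; field; by rewrite ?hz ?hw. Qed.

Lemma rC_neq0 (t : R) : t != 0 -> rC t != 0.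
Proof. by move=> ht; rewrite rCE fmorph_eq0. Qed.

Lemma amx_mul (t s : R) : t != 0 -> s != 0 -> amx t *m amx s = amx (t * s).
Proof. move=> ht hs; rewrite !amxE mx3_mul rC_mul; congr mx3; field; by rewrite ?rC_neq0. Qed.

Lemma amx_mmx (t : R) (z : C) : amx t *m mmx z = mmx z *m amx t.
Proof. rewrite amxE /mmx !mx3_mul; congr mx3; ring. Qed.

Lemma mmx_nmx (z b : C) (r : R) : z != 0 -> cj z = z^-1 ->
  mmx z *m nmx b r = nmx (z ^+ 3 * b) r *m mmx z.
Proof.
move=> hz hc; rewrite /mmx !nmxE !mx3_mul; congr mx3; rewrite ?cj_mul ?cj_exp ?hc; field; by rewrite hz.
Qed.

Lemma amx_nmx (t : R) (b : C) (r : R) : t != 0 ->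
  amx t *m nmx b r = nmx (rC t * b) (t ^+ 2 * r) *m amx t.
Proof.
move=> ht; rewrite amxE !nmxE !mx3_mul; congr mx3; rewrite ?cj_mul ?cj_rC ?rC_mul ?expr2 ?rC_mul; field; by rewrite ?(rC_neq0 ht).
Qed.
End S.


Section L.
Variable R : realType.
Local Notation C := (complex R).
Local Notation ReC := (@complex.Re R).
Local Notation ImC := (@complex.Im R).
Local Notation M3 := ('M[C]_3).
Ltac ceq := apply/eqP; rewrite eq_complex /=; apply/andP; split; apply/eqP.

Definition isint (x : R) := exists k : int, x = k%:~R.
Lemma isintD x y : isint x -> isint y -> isint (x + y).
Proof. by move=> [a ->] [b ->]; exists (a + b); rewrite intrD. Qed.
Lemma isintN x : isint x -> isint (- x).
Proof. by move=> [a ->]; exists (- a); rewrite intrN. Qed.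
Lemma isintB x y : isint x -> isint y -> isint (x - y).
Proof. by move=> hx hy; apply: isintD => //; apply: isintN. Qed.
Lemma isintM x y : isint x -> isint y -> isint (x * y).
Proof. by move=> [a ->] [b ->]; exists (a * b); rewrite intrM. Qed.
Lemma isint_nat n : isint n%:R.
Proof. by exists n%:Z. Qed.
Lemma isint_int (k : int) : isint k%:~R.
Proof. by exists k. Qed.
Lemma isint0 : isint 0. Proof. by exists 0. Qed.
Lemma isint1 : isint 1. Proof. by exists 1. Qed.

Lemma invmx_uniq (A B : M3) : A *m B = 1%:M -> invmx A = B.
Proof. move=> h; have [uA _] := mulmx1_unit h. by rewrite -(mulKmx uA B) h mulmx1. Qed.

Lemma nmx_inv (b : C) (r : R) : nmx b r *m nmx (-b) (-r) = 1%:M.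
Proof.
rewrite nmx_mul addrN.
have -> : r + - r + ImC (cj b * - b) = 0 by case: b => b1 b2 /=; ring.
exact: nmx00.
Qed.
Lemma invmx_nmx (b : C) (r : R) : invmx (nmx b r) = nmx (-b) (-r).
Proof. exact/invmx_uniq/nmx_inv. Qed.
Lemma unit_nmx (b : C) (r : R) : nmx b r \in unitmx.
Proof. by case: (mulmx1_unit (nmx_inv b r)). Qed.

Lemma rC_inj : injective (@rC R).
Proof. by move=> x y []. Qed.
Lemma iC_neq0 : iC R != 0.
Proof. by apply/eqP => /(congr1 ImC) /= /eqP; rewrite oner_eq0. Qed.

Lemma mx3_inj (a b c d e f g h k a' b' c' d' e' f' g' h' k' : C) :
  mx3 a b c d e f g h k = mx3 a' b' c' d' e' f' g' h' k' ->
  [/\ a = a', b = b', c = c', d = d' & [/\ e = e', f = f', g = g', h = h' & k = k']].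
Proof.
move=> E.
have P i j : (mx3 a b c d e f g h k) i j = (mx3 a' b' c' d' e' f' g' h' k') i j by rewrite E.
have := P ord0 ord0; have := P ord0 (lift ord0 ord0); have := P ord0 (lift ord0 (lift ord0 ord0)).
have := P (lift ord0 ord0) ord0; have := P (lift ord0 ord0) (lift ord0 ord0); have := P (lift ord0 ord0) (lift ord0 (lift ord0 ord0)).
have := P (lift ord0 (lift ord0 ord0)) ord0; have := P (lift ord0 (lift ord0 ord0)) (lift ord0 ord0); have := P (lift ord0 (lift ord0 ord0)) (lift ord0 (lift ord0 ord0)).
by rewrite !mxE /= => *.
Qed.

Lemma nmx_inj (b b' : C) (r r' : R) : nmx b r = nmx b' r' -> b = b' /\ r = r'.
Proof.
rewrite !nmxE => /mx3_inj [h0 h1 _ _ [_ _ _ _ _]]; split => //.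
subst b'. move/eqP: h0; rewrite -subr_eq0.
have -> : 1 + iC R * rC r - 1 / 2 * (b * cj b) - (1 + iC R * rC r' - 1 / 2 * (b * cj b))
   = iC R * (rC r - rC r') by ring.
rewrite mulf_eq0 (negbTE iC_neq0) /= subr_eq0 => /eqP; exact: rC_inj.
Qed.

End L.


Section Lam.
Variable R : realType.
Variable sigma : nat.
Hypothesis hs : (0 < sigma)%N.
Local Notation C := (complex R).
Local Notation ReC := (@complex.Re R).
Local Notation ImC := (@complex.Im R).
Local Notation M3 := ('M[C]_3).
Local Notation L := (@Lambda R sigma).
Local Notation s := (sigma%:R : R).
Ltac ceq := apply/eqP; rewrite eq_complex /=; apply/andP; split; apply/eqP.

Lemma s_neq0 : s != 0. Proof. by rewrite pnatr_eq0 -lt0n. Qed.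

Definition inLam (b : C) (r : R) :=
  isint (ReC b) /\ isint (ImC b) /\ isint ((r - ReC b * ImC b) * s / 2).

Lemma Lam_pow_nat (b : C) (r : R) n : L (nmx b r) -> L (nmx (rC n%:R * b) (n%:R * r)).
Proof.
move=> h; elim: n => [|n IH].
  by rewrite !mulr0n rC0 !mul0r nmx00; exact: Lam_one.
have -> : nmx (rC n.+1%:R * b) (n.+1%:R * r) = nmx (rC n%:R * b) (n%:R * r) *m nmx b r.
  rewrite nmx_mul; congr nmx.
    by rewrite -natr1 rC_add rC1; ring.
  by case: b {h IH} => b1 b2 /=; rewrite -natr1; ring.
exact: Lam_mul.
Qed.

Lemma Lam_pow_int (b : C) (r : R) (k : int) : L (nmx b r) -> L (nmx (rC k%:~R * b) (k%:~R * r)).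
Proof.
move=> h; case: k => n; first exact: Lam_pow_nat.
have := Lam_inv (Lam_pow_nat n.+1 h); rewrite invmx_nmx.
by rewrite NegzE !intrN rC_opp !mulNr.
Qed.

Lemma Lam_of_inLam (b : C) (r : R) : inLam b r -> L (nmx b r).
Proof.
case=> [[x hx] [[y hy] [k hk]]].
have hr : r = x%:~R * y%:~R + 2 * k%:~R / s.
  rewrite -hk -hx -hy; field; exact: s_neq0.
have -> : nmx b r = nmx (rC x%:~R * 1) (x%:~R * 0) *m nmx (rC y%:~R * iC R) (y%:~R * 0)
                    *m nmx (rC k%:~R * 0) (k%:~R * (2 / s)).
  rewrite !nmx_mul; congr nmx.
    by case: b hx hy {hr hk} => b1 b2 /= -> ->; ceq; ring.
  rewrite hr /=; field; exact: s_neq0.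
apply: Lam_mul; first apply: Lam_mul.
- by apply: Lam_pow_int; exact: Lam_gen1.
- by apply: Lam_pow_int; exact: Lam_gen2.
- by apply: Lam_pow_int; exact: Lam_gen3.
Qed.

Lemma inLam_of_Lam (g : M3) : L g -> exists b r, inLam b r /\ g = nmx b r.
Proof.
elim => {g}.
- exists 0, 0; split; last by rewrite nmx00.
  by split; [|split]; exists 0; rewrite /=; ring.
- exists 1, 0; split => //.
  by split; [|split]; [exists 1|exists 0|exists 0]; rewrite /=; ring.
- exists (iC R), 0; split => //.
  by split; [|split]; [exists 0|exists 1|exists 0]; rewrite /=; ring.
- exists 0, (2 / s); split => //.
  split; [|split]; [exists 0|exists 0|exists 1]; rewrite /=; try ring.
  field; exact: s_neq0.
- move=> g h _ [b [r [[hb1 [hb2 hb3]] ->]]] _ [b' [r' [[hb1' [hb2' hb3']] ->]]].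
  exists (b + b'), (r + r' + ImC (cj b * b')); split; last by rewrite nmx_mul.
  split; [|split].
  + by case: b hb1 {hb2 hb3} => b1 b2; case: b' hb1' {hb2' hb3'} => b1' b2' /= h1 h2; apply: isintD.
  + by case: b hb2 {hb1 hb3} => b1 b2; case: b' hb2' {hb1' hb3'} => b1' b2' /= h1 h2; apply: isintD.
  + have -> : (r + r' + ImC (cj b * b') - ReC (b + b') * ImC (b + b')) * s / 2 =
       (r - ReC b * ImC b) * s / 2 + (r' - ReC b' * ImC b') * s / 2 - ImC b * ReC b' * s.
      by case: b {hb1 hb2 hb3} => b1 b2; case: b' {hb1' hb2' hb3'} => b1' b2' /=; field.
    apply: isintB; first exact: isintD.
    by apply: isintM; [exact: isintM|exact: isint_nat].
- move=> g _ [b [r [[hb1 [hb2 hb3]] ->]]].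
  exists (- b), (- r); split; last by rewrite invmx_nmx.
  split; [|split].
  + by case: b hb1 {hb2 hb3} => b1 b2 /= h1; apply: isintN.
  + by case: b hb2 {hb1 hb3} => b1 b2 /= h1; apply: isintN.
  + have -> : (- r - ReC (- b) * ImC (- b)) * s / 2 =
       - ((r - ReC b * ImC b) * s / 2) - ReC b * ImC b * s.
      by case: b {hb1 hb2 hb3} => b1 b2 /=; field.
    apply: isintB; first exact: isintN.
    by apply: isintM; [exact: isintM|exact: isint_nat].
Qed.

Lemma LamN (b : C) (r : R) : L (nmx b r) <-> inLam b r.
Proof.
split; last exact: Lam_of_inLam.
by case/inLam_of_Lam => b' [r' [h /nmx_inj [-> ->]]].
Qed.

End Lam.


Section Gen.
Variable R : realType.
Local Notation C := (complex R).
Local Notation ReC := (@complex.Re R).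
Local Notation ImC := (@complex.Im R).
Local Notation M3 := ('M[C]_3).
Variable L : M3 -> Prop.

Lemma invmxM3 (A B : M3) : A \in unitmx -> B \in unitmx ->
  invmx (A *m B) = invmx B *m invmx A.
Proof.
move=> uA uB; apply: invmx_uniq.
by rewrite -mulmxA (mulmxA B) (mulmxV uB) mul1mx (mulmxV uA).
Qed.

Lemma conjM (A B g : M3) : A \in unitmx -> B \in unitmx ->
  A *m B *m g *m invmx (A *m B) = A *m (B *m g *m invmx B) *m invmx A.
Proof. by move=> uA uB; rewrite invmxM3 // !mulmxA. Qed.

Lemma norm_of (p : M3) : p \in unitmx ->
  (forall g, L g -> L (p *m g *m invmx p)) ->
  (forall g, L g -> L (invmx p *m g *m p)) -> normalizes L p.
Proof.
move=> up h1 h2; split => // h Lh; exists (invmx p *m h *m p); split; first exact: h2.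
by rewrite !mulmxA (mulmxV up) mul1mx -mulmxA (mulmxV up) mulmx1.
Qed.

Lemma norm_inv (p : M3) : p \in unitmx -> normalizes L p -> normalizes L (invmx p).
Proof.
move=> up [h1 h2]; apply: norm_of; rewrite ?unitmx_inv ?invmxK //.
  move=> g /h2 [g' [Lg' ->]].
  by rewrite !mulmxA (mulVmx up) mul1mx -mulmxA (mulVmx up) mulmx1.
all: by move=> g /h1.
Qed.

Lemma norm_mul (p q : M3) : p \in unitmx -> q \in unitmx ->
  normalizes L p -> normalizes L q -> normalizes L (p *m q).
Proof.
move=> up uq [hp1 hp2] [hq1 hq2]; split.
  by move=> g Lg; rewrite conjM //; apply/hp1/hq1.
move=> h /hp2 [g1 [/hq2 [g2 [Lg2 ->]] ->]]; exists g2; split => //.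
by rewrite conjM.
Qed.

End Gen.


Section Conj.
Variable R : realType.
Local Notation C := (complex R).
Local Notation ReC := (@complex.Re R).
Local Notation ImC := (@complex.Im R).
Local Notation M3 := ('M[C]_3).
Ltac ceq := apply/eqP; rewrite eq_complex /=; apply/andP; split; apply/eqP.

Lemma unitmod_neq0 (z : C) : is_unit_modulus z -> z != 0.
Proof. by rewrite /is_unit_modulus => h; apply/eqP => z0; move: h; rewrite z0 mul0r => /eqP; rewrite eq_sym oner_eq0. Qed.

Lemma unitmod_cj (z : C) : is_unit_modulus z -> cj z = z^-1.
Proof. move=> h; have nz := unitmod_neq0 h; by rewrite -[cj z](mulKf nz) h mulr1. Qed.

Lemma unitmod_cjz (z : C) : is_unit_modulus z -> is_unit_modulus (cj z).
Proof. by rewrite /is_unit_modulus cjK mulrC. Qed.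

Lemma mmx_inv (z : C) : z != 0 -> mmx z *m mmx z^-1 = 1%:M.
Proof. by move=> nz; rewrite mmx_mul ?invr_eq0 // divff // mmx1. Qed.

Lemma unit_mmx (z : C) : z != 0 -> mmx z \in unitmx.
Proof. by move=> nz; case: (mulmx1_unit (mmx_inv nz)). Qed.

Lemma invmx_mmx (z : C) : is_unit_modulus z -> invmx (mmx z) = mmx (cj z).
Proof. move=> h; rewrite unitmod_cj //; apply: invmx_uniq; exact/mmx_inv/unitmod_neq0. Qed.

Lemma amx_inv (t : R) : t != 0 -> amx t *m amx t^-1 = 1%:M.
Proof. by move=> nz; rewrite amx_mul ?invr_eq0 // divff // amx1. Qed.

Lemma unit_amx (t : R) : t != 0 -> amx t \in unitmx.
Proof. by move=> nz; case: (mulmx1_unit (amx_inv nz)). Qed.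

Lemma conjN (c b : C) (rho r : R) :
  nmx c rho *m nmx b r *m invmx (nmx c rho) = nmx b (r + 2 * ImC (cj c * b)).
Proof.
rewrite invmx_nmx !nmx_mul; congr nmx; first by ring.
by case: c => c1 c2; case: b => b1 b2 /=; ring.
Qed.

Lemma conjMm (z b : C) (r : R) : is_unit_modulus z ->
  mmx z *m nmx b r *m invmx (mmx z) = nmx (z ^+ 3 * b) r.
Proof.
move=> h; have nz := unitmod_neq0 h.
by rewrite mmx_nmx // ?unitmod_cj // mulmxK // unit_mmx.
Qed.

Lemma conjA (t : R) (b : C) (r : R) : t != 0 ->
  amx t *m nmx b r *m invmx (amx t) = nmx (rC t * b) (t ^+ 2 * r).
Proof. by move=> nt; rewrite amx_nmx // mulmxK // unit_amx. Qed.

Lemma conjP (c : C) (rho t : R) (z b : C) (r : R) : t != 0 -> is_unit_modulus z ->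
  nmx c rho *m amx t *m mmx z *m nmx b r *m invmx (nmx c rho *m amx t *m mmx z) =
  nmx (rC t * (z ^+ 3 * b)) (t ^+ 2 * r + 2 * ImC (cj c * (rC t * (z ^+ 3 * b)))).
Proof.
move=> nt h; have nz := unitmod_neq0 h.
rewrite conjM ?unit_mmx ?unitmx_mul ?unit_nmx ?unit_amx //.
by rewrite conjMm // conjM ?unit_nmx ?unit_amx // conjA // conjN.
Qed.

End Conj.


Section Claims.
Variable R : realType.
Variable sigma : nat.
Hypothesis hs : (0 < sigma)%N.
Local Notation C := (complex R).
Local Notation ReC := (@complex.Re R).
Local Notation ImC := (@complex.Im R).
Local Notation M3 := ('M[C]_3).
Local Notation L := (@Lambda R sigma).
Local Notation s := (sigma%:R : R).
Ltac ceq := apply/eqP; rewrite eq_complex /=; apply/andP; split; apply/eqP.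

Lemma inLam_i (b : C) (r : R) : inLam sigma b r -> inLam sigma (iC R * b) r.
Proof.
case: b => b1 b2 [h1 [h2 h3]].
have e1 : ReC (iC R * Complex b1 b2) = - b2 by rewrite /=; ring.
have e2 : ImC (iC R * Complex b1 b2) = b1 by rewrite /=; ring.
rewrite /inLam e1 e2; split; [exact: isintN|split => //].
have -> : (r - - b2 * b1) * s / 2 = (r - b1 * b2) * s / 2 + b1 * b2 * s by field.
by apply: isintD => //; apply: isintM; [exact: isintM|exact: isint_nat].
Qed.

Lemma inLam_N (b : C) (r : R) : inLam sigma b r -> inLam sigma (- b) r.
Proof.
case: b => b1 b2 [h1 [h2 h3]].
have e1 : ReC (- Complex b1 b2) = - b1 by [].
have e2 : ImC (- Complex b1 b2) = - b2 by [].
rewrite /inLam e1 e2; split; [exact: isintN|split; first exact: isintN].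
by rewrite mulrNN.
Qed.

Lemma w4_cases (w : C) : w ^+ 4 = 1 -> [\/ w = 1, w = -1, w = iC R | w = - iC R].
Proof.
move=> h.
have : (w - 1) * (w + 1) * ((w - iC R) * (w + iC R)) == 0.
  have -> : (w - 1) * (w + 1) * ((w - iC R) * (w + iC R)) = w ^+ 4 - 1 + (w * w - 1) * (- (iC R * iC R) - 1).
    by ring.
  by rewrite iC2 opprK subrr mulr0 addr0 h subrr.
rewrite !mulf_eq0 !subr_eq0 !addr_eq0 => /orP [/orP [/eqP -> | /eqP ->] | /orP [/eqP -> | /eqP ->]].
- by constructor 1.
- by constructor 2.
- by constructor 3.
- by constructor 4.
Qed.

Lemma presM (z : C) : is_unit_modulus z -> z ^+ 12 = 1 ->
  forall g, L g -> L (mmx z *m g *m invmx (mmx z)).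
Proof.
move=> hu h12 g /(inLam_of_Lam hs) [b [r [hb ->]]].
rewrite conjMm //; apply/(LamN hs).
have : (z ^+ 3) ^+ 4 = 1 by rewrite -exprM.
case/w4_cases => ->.
- by rewrite mul1r.
- by rewrite mulN1r; apply: inLam_N.
- exact: inLam_i.
- by rewrite mulNr; apply/inLam_N/inLam_i.
Qed.

Lemma NormM_of (z : C) : is_unit_modulus z -> z ^+ 12 = 1 -> Norm (@inM R) L (mmx z).
Proof.
move=> hu h12; split; first by exists z.
have nz := unitmod_neq0 hu.
apply: norm_of; first exact: unit_mmx.
  exact: presM.
have hu' := unitmod_cjz hu.
have e : invmx (mmx (cj z)) = mmx z by rewrite invmx_mmx // cjK.
move=> g Lg; rewrite invmx_mmx // -e; apply: presM => //.
by rewrite -cj_exp h12 cjE rmorph1.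
Qed.


Lemma z12_of_gauss (z : C) : is_unit_modulus z -> isint (ReC (z ^+ 3)) -> isint (ImC (z ^+ 3)) ->
  z ^+ 12 = 1.
Proof.
move=> hu [x hx] [y hy].
have hw : z ^+ 3 * cj (z ^+ 3) = 1 by rewrite cj_exp -exprMn hu expr1n.
have {hx hy} ew : z ^+ 3 = Complex x%:~R y%:~R by rewrite -hx -hy; case: (z ^+ 3).
rewrite ew in hw.
have h1 : x%:~R * x%:~R + y%:~R * y%:~R = 1 :> R.
  by move: hw => /(congr1 ReC) /=; rewrite mulrN opprK.
have h1z : x * x + y * y = 1.
  by apply: (@intr_inj R); rewrite intrD !intrM h1.
have h2z : x * y = 0 by nia.
have h2 : x%:~R * y%:~R = 0 :> R by rewrite -intrM h2z.
rewrite (_ : 12 = 3 * 4)%N // exprM ew !exprS expr0 mulr1; ceq.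
  transitivity ((x%:~R * x%:~R + y%:~R * y%:~R) ^+ 2 - 8 * (x%:~R * y%:~R) ^+ 2 : R); first by ring.
  by rewrite h1 h2; ring.
transitivity (4 * (x%:~R * y%:~R) * (x%:~R * x%:~R - y%:~R * y%:~R) : R); first by ring.
by rewrite h2; ring.
Qed.

Lemma presN (c : C) (rho : R) : isint (ReC c * s) -> isint (ImC c * s) ->
  forall g, L g -> L (nmx c rho *m g *m invmx (nmx c rho)).
Proof.
move=> hc1 hc2 g /(inLam_of_Lam hs) [b [r [[hb1 [hb2 hb3]] ->]]].
rewrite conjN; apply/(LamN hs); split => //; split => //.
have -> : (r + 2 * ImC (cj c * b) - ReC b * ImC b) * s / 2 =
   (r - ReC b * ImC b) * s / 2 + (ReC c * s) * ImC b - (ImC c * s) * ReC b.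
  by case: c {hc1 hc2} => c1 c2; case: b {hb1 hb2 hb3} => b1 b2 /=; field.
by apply: isintB; [apply: isintD => //|]; apply: isintM.
Qed.

Lemma NormN_of (c : C) (rho : R) : isint (ReC c * s) -> isint (ImC c * s) ->
  Norm (@inN R) L (nmx c rho).
Proof.
move=> hc1 hc2; split; first by exists c, rho.
apply: norm_of; first exact: unit_nmx.
  exact: presN.
move=> g Lg.
have e : nmx c rho = invmx (nmx (- c) (- rho)) by rewrite invmx_nmx !opprK.
rewrite {2}e invmx_nmx; apply: presN => //.
- by rewrite (_ : ReC (- c) = - ReC c) ?mulNr; [apply: isintN | case: c {hc1 hc2 e}].
- by rewrite (_ : ImC (- c) = - ImC c) ?mulNr; [apply: isintN | case: c {hc1 hc2 e}].
Qed.

Lemma NormN_inv (g : M3) : Norm (@inN R) L g ->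
  exists c rho, [/\ isint (ReC c * s), isint (ImC c * s) & g = nmx c rho].
Proof.
case=> [[c [rho ->]] [h1 _]]; exists c, rho; split => //.
- have := h1 _ (Lam_gen2 R sigma); rewrite conjN => /(LamN hs) [_ [_ h]].
  move: h; rewrite (_ : (0 + 2 * ImC (cj c * iC R) - ReC (iC R) * ImC (iC R)) * s / 2 = ReC c * s) //.
  by case: c {h1} => c1 c2 /=; field.
- have := h1 _ (Lam_gen1 R sigma); rewrite conjN => /(LamN hs) [_ [_ h]].
  move: h; rewrite (_ : (0 + 2 * ImC (cj c * 1) - ReC 1 * ImC 1) * s / 2 = - (ImC c * s)).
    by move/isintN; rewrite opprK.
  by case: c {h1} => c1 c2 /=; field.
Qed.
End Claims.


Section Final.
Variable R : realType.
Variable sigma : nat.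
Hypothesis hs : (0 < sigma)%N.
Local Notation C := (complex R).
Local Notation ReC := (@complex.Re R).
Local Notation ImC := (@complex.Im R).
Local Notation M3 := ('M[C]_3).
Local Notation L := (@Lambda R sigma).
Local Notation s := (sigma%:R : R).
Ltac ceq := apply/eqP; rewrite eq_complex /=; apply/andP; split; apply/eqP.

Lemma ReC_rCmul (u : R) (w : C) : ReC (rC u * w) = u * ReC w.
Proof. by case: w => a b /=; ring. Qed.
Lemma ImC_rCmul (u : R) (w : C) : ImC (rC u * w) = u * ImC w.
Proof. by case: w => a b /=; ring. Qed.

Lemma claim1 (g : M3) : Norm (@inN R) L g <->
     exists (beta : C) (rho : R), gaussian_int beta /\ g = nmx (beta / (rC s)) rho.
Proof.
have ns : s != 0 by rewrite pnatr_eq0 -lt0n.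
split.
  case/(NormN_inv hs) => c [rho [[x hx] [y hy] ->]].
  exists (Complex x%:~R y%:~R), rho; split; first by exists x, y.
  congr nmx; apply: (mulIf (rC_neq0 ns)); rewrite mulfVK ?rC_neq0 //.
  by case: c hx hy => c1 c2 /= <- <-; ceq; ring.
case=> beta [rho [[x [y ->]] ->]].
rewrite -rC_inv (mulrC (Complex _ _)); apply: NormN_of => //.
- by rewrite ReC_rCmul /= mulrAC mulVf // mul1r; exact: isint_int.
- by rewrite ImC_rCmul /= mulrAC mulVf // mul1r; exact: isint_int.
Qed.

Lemma claim2 (g : M3) : Norm (@inM R) L g <->
     exists zeta : C, is_unit_modulus zeta /\ zeta ^+ 12 = 1 /\ g = mmx zeta.
Proof.
split; last by case=> z [hu [h12 ->]]; exact: NormM_of.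
case=> [[z [hu ->]] [h1 _]]; exists z; split => //; split => //.
have := h1 _ (Lam_gen1 R sigma); rewrite conjMm // mulr1 => /(LamN hs) [ha [hb _]].
exact: (z12_of_gauss hs hu ha hb).
Qed.


Lemma nmx_eq_mmx (B : C) (Rr : R) (w : C) : nmx B Rr = mmx w -> B = 0 /\ Rr = 0.
Proof.
rewrite nmxE /mmx => /mx3_inj [_ _ h2 h3 _].
have eB : B = 0.
  by rewrite -[B]cjK; move/eqP: h3; rewrite oppr_eq0 => /eqP ->; rewrite cjE rmorph0.
split => //; subst B.
move: h2; rewrite mul0r mulr0 addr0 mulNr => /eqP; rewrite oppr_eq0 mulf_eq0 (negbTE (iC_neq0 R)) /= => /eqP h.
by apply: rC_inj; rewrite h rC0.
Qed.

Lemma claim3 (p : M3) : Norm (@inP R) L p <->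
     exists n m, Norm (@inN R) L n /\ Norm (@inM R) L m /\ p = n *m m.
Proof.
have ns : s != 0 by rewrite pnatr_eq0 -lt0n.
split; last first.
  case=> n [m [[[c [rho ->]] hn] [[[z [hu ->]] hm] ->]]]; split.
    exists (nmx c rho), (amx 1), (mmx z); split; first by exists c, rho.
    split; first by exists 1; rewrite ltr01.
    by split; [exists z | rewrite amx1 mulmx1].
  by apply: norm_mul => //; [exact: unit_nmx | exact/unit_mmx/unitmod_neq0].
case=> [[n [a [m [[c [rho ->]] [[t [t0 ->]] [[z [hu ->]] ->]]]]]] [h1 h2]].
have nt : t != 0 by rewrite gt_eqF.
have nz := unitmod_neq0 hu.
have [k hk] : isint (t ^+ 2).
  have := h1 _ (Lam_gen3 R sigma); rewrite conjP // !mulr0 => /(LamN hs) [_ [_ h]].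
  move: h; rewrite (_ : (t ^+ 2 * (2 / s) + 0 - ReC 0 * ImC 0) * s / 2 = t ^+ 2) //.
  rewrite (_ : ImC 0 = 0) // mulr0 addr0 subr0; by field.
have [g [Lg E]] := h2 _ (Lam_gen3 R sigma).
have [b [r [hb Eg]]] := inLam_of_Lam hs Lg; subst g.
rewrite conjP // in E; case/nmx_inj: E => Eb Er.
have b0 : b = 0.
  have h3 : z ^+ 3 != 0 by rewrite expf_neq0.
  apply/eqP; move/esym/eqP: Eb.
  by rewrite mulf_eq0 (negbTE (rC_neq0 nt)) /= mulf_eq0 (negbTE h3).
subst b; rewrite !mulr0 addr0 in Er.
case: hb => _ [_ [k' hk']].
move: hk'; rewrite (_ : ReC 0 = 0) // mul0r subr0 => hk'.
have e1 : t ^+ 2 * (r * s / 2) = 1.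
  transitivity ((2 / s) * s / 2); first by rewrite Er; ring.
  by field.
rewrite hk hk' -intrM in e1.
have kk : k * k' = 1 by apply: (@intr_inj R); rewrite e1.
have kpos : 0 < k by rewrite -(ltr0z R) -hk exprn_gt0.
have k1 : k = 1.
  have k3 : (0 < k')%R by nia.
  nia.
rewrite k1 in hk.
have t1 : t = 1.
  have : (t - 1) * (t + 1) = 0 by transitivity (t ^+ 2 - 1); [ring | rewrite hk; ring].
  move/eqP; rewrite mulf_eq0 subr_eq0 => /orP [/eqP //|].
  by rewrite addr_eq0 => /eqP ht; move: t0; rewrite ht oppr_gt0 ltr10.
subst t.
have := h1 _ (Lam_gen1 R sigma); rewrite conjP // rC1 !mul1r !mulr1 => /(LamN hs) [ha [hb _]].
have h12 := z12_of_gauss hs hu ha hb.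
have hm := NormM_of hs hu h12.
have up : nmx c rho *m amx 1 *m mmx z \in unitmx.
  by rewrite !unitmx_mul unit_nmx unit_mmx // amx1 unitmx1.
exists (nmx c rho), (mmx z); split; last by split => //; rewrite amx1 mulmx1.
split; first by exists c, rho.
have -> : nmx c rho = (nmx c rho *m amx 1 *m mmx z) *m invmx (mmx z).
  by rewrite amx1 mulmx1 mulmxK // unit_mmx.
apply: norm_mul => //; first by rewrite unitmx_inv unit_mmx.
apply: norm_inv; first exact: unit_mmx.
by case: hm.
Qed.

Lemma claim4 (n m n' m' : M3) :
     Norm (@inN R) L n -> Norm (@inM R) L m ->
     Norm (@inN R) L n' -> Norm (@inM R) L m' ->
     n *m m = n' *m m' -> n = n' /\ m = m'.
Proof.
move=> [[c [rho ->]] _] [[z [hu ->]] _] [[c' [rho' ->]] _] [[z' [hu' ->]] _] E.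
have nz := unitmod_neq0 hu; have nz' := unitmod_neq0 hu'.
have E2 : invmx (nmx c' rho') *m (nmx c rho *m mmx z) *m invmx (mmx z) =
          invmx (nmx c' rho') *m (nmx c' rho' *m mmx z') *m invmx (mmx z) by rewrite E.
rewrite !mulmxA mulmxK ?unit_mmx // mulVmx ?unit_nmx // mul1mx in E2.
move: E2; rewrite invmx_nmx nmx_mul invmx_mmx // mmx_mul //; last exact/unitmod_neq0/unitmod_cjz.
case/nmx_eq_mmx => eb er.
have E3 : invmx (nmx c' rho') *m nmx c rho = 1%:M by rewrite invmx_nmx nmx_mul eb er nmx00.
have En : nmx c rho = nmx c' rho'.
  by rewrite -[nmx c rho](mulKVmx (unit_nmx c' rho')) E3 mulmx1.
split => //; rewrite En in E.
by rewrite -[mmx z](mulKmx (unit_nmx c' rho')) E mulKmx // unit_nmx.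
Qed.

Lemma claim5 (p n : M3) :
     Norm (@inP R) L p -> Norm (@inN R) L n ->
     Norm (@inN R) L (p *m n *m invmx p).
Proof.
move=> hp [[b [r En]] hn].
have [n1 [m1 [[[c [rho En1]] hn1] [[[z [hu Em1]] hm1] Ep]]]] := (claim3 p).1 hp.
have nz := unitmod_neq0 hu.
have up : p \in unitmx by rewrite Ep En1 Em1 unitmx_mul unit_nmx unit_mmx.
have un : n \in unitmx by rewrite En unit_nmx.
split.
  exists (z ^+ 3 * b), (r + 2 * ImC (cj c * (z ^+ 3 * b))).
  by rewrite Ep En1 Em1 En conjM ?unit_nmx ?unit_mmx // conjMm // conjN.
apply: norm_mul; [by rewrite unitmx_mul up un | by rewrite unitmx_inv | | ].
  by apply: norm_mul => //; case: hp.
by apply: norm_inv => //; case: hp.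
Qed.
End Final.

Unset Implicit Arguments.

Theorem proposition8p5 (R : realType) (sigma : nat) (hsigma : (1 <= sigma)%N) :
  (* Norm_N(Lambda_sigma) = { n(beta/sigma, rho) : beta in Z[i], rho in R } *)
  (forall g : 'M[complex R]_3,
     Norm (@inN R) (Lambda sigma) g <->
     exists (beta : complex R) (rho : R),
       gaussian_int beta /\ g = nmx (beta / (rC (sigma%:R : R))) rho) /\
  (* Norm_M(Lambda_sigma) = { m(zeta) in M : zeta^12 = 1 } *)
  (forall g : 'M[complex R]_3,
     Norm (@inM R) (Lambda sigma) g <->
     exists zeta : complex R,
       is_unit_modulus zeta /\ zeta ^+ 12 = 1 /\ g = mmx zeta) /\
  (* Norm_P(Lambda_sigma) is the semi-direct product Norm_N ⋊ Norm_M : *)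
  (* Norm_P = Norm_N * Norm_M, *)
  (forall p : 'M[complex R]_3,
     Norm (@inP R) (Lambda sigma) p <->
     exists n m, Norm (@inN R) (Lambda sigma) n /\
                 Norm (@inM R) (Lambda sigma) m /\ p = n *m m) /\
  (* with unique decomposition (Norm_N ∩ Norm_M trivial), *)
  (forall n m n' m' : 'M[complex R]_3,
     Norm (@inN R) (Lambda sigma) n -> Norm (@inM R) (Lambda sigma) m ->
     Norm (@inN R) (Lambda sigma) n' -> Norm (@inM R) (Lambda sigma) m' ->
     n *m m = n' *m m' -> n = n' /\ m = m') /\
  (* and Norm_N normal in Norm_P. *)
  (forall p n : 'M[complex R]_3,
     Norm (@inP R) (Lambda sigma) p -> Norm (@inN R) (Lambda sigma) n ->
     Norm (@inN R) (Lambda sigma) (p *m n *m invmx p)).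
Proof.
split; first by move=> g; exact: claim1.
split; first by move=> g; exact: claim2.
split; first by move=> p; exact: claim3.
split; first by move=> n m n' m'; exact: claim4.
by move=> p n; exact: claim5.
Qed.
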